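(* Let $f:A\to B$ be a ring homomorphism, $\mathfrak b$ an ideal of $B$, and $A\bowtie^f\mathfrak b:=\{(a,f(a)+b): a\in A,\ b\in\mathfrak b\}\subseteq A\times B$. Assume $A\bowtie^f\mathfrak b$ is a Prüfer ring. Then: (1) if $\{0\}\times\mathfrak b$ is a regular ideal of $A\bowtie^f\mathfrak b$, then $A$ is a Prüfer ring; (2) if $f^{-1}(\mathfrak b)\times\{0\}$ is a regular ideal of $A\bowtie^f\mathfrak b$, then the subring $f(A)+\mathfrak b$ of $B$ is a Prüfer ring.
   Context: All rings are commutative with identity. An ideal is regular if it contains a non-zerodivisor. A ring is a Prüfer ring if every regular finitely generated ideal is invertible. Note $\{0\}\times\mathfrak b$ and $f^{-1}(\mathfrak b)\times\{0\}$ are ideals of $A\bowtie^f\mathfrak b$. *)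

(* Defs.v *)
From HB Require Import structures.
From mathcomp Require Import all_boot all_order all_algebra.
Set Implicit Arguments. Unset Strict Implicit. Unset Printing Implicit Defensive.
Import GRing.Theory.
Local Open Scope ring_scope.

(* Subrings of a commutative ring R are represented by Prop-valued predicates
   S : R -> Prop; every notion below (ideal, regular element, ...) is taken
   relative to the ring S (whose operations are those of R). *)

Section Rel.
Variable R : comPzRingType.
Implicit Types (S I : R -> Prop).

Definition full_pred : R -> Prop := fun _ => True.

Definition ideal_in S I : Prop :=
  [/\ forall x, I x -> S x,
      I 0,
      forall x y, I x -> I y -> I (x + y)
    & forall r x, S r -> I x -> I (r * x)].

Definition regular_in S (x : R) : Prop :=
  S x /\ forall y, S y -> x * y = 0 -> y = 0.

Definition regular_ideal_in S I : Prop :=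
  exists x, I x /\ regular_in S x.

Definition fin_gen_in S I : Prop :=
  exists g : seq R, forall x, I x <->
    exists c : 'I_(size g) -> R,
      (forall i, S (c i)) /\ x = \sum_(i < size g) c i * g`_i.

(* I is invertible: there are u_1..u_n in the total ring of fractions T(S)
   with u_i I ⊆ S and sum x_i u_i = 1 for some x_i in I (i.e. I J = S for
   the fractional ideal J generated by the u_i).  Elements of T(S) are
   written with a common regular denominator s: u_i = a_i / s; in T(S),
   u_i * y ∈ S iff a_i * y = s * z for some z ∈ S, and sum x_i u_i = 1
   iff sum x_i a_i = s. *)
Definition invertible_in S I : Prop :=
  exists (s : R) (n : nat) (x a : 'I_n -> R),
    [/\ regular_in S s,
        forall i, I (x i),
        forall i, S (a i),
        \sum_(i < n) x i * a i = s
      & forall i y, I y -> exists z, S z /\ a i * y = s * z].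

Definition prufer_in S : Prop :=
  forall I, ideal_in S I -> fin_gen_in S I -> regular_ideal_in S I ->
    invertible_in S I.

End Rel.

Definition prufer (R : comPzRingType) : Prop := prufer_in (@full_pred R).

Definition amalg (A B : comPzRingType) (f : A -> B) (b : B -> Prop)
  : A * B -> Prop := fun p => b (p.2 - f p.1).

Definition img_plus (A B : comPzRingType) (f : A -> B) (b : B -> Prop)
  : B -> Prop := fun y => exists a, b (y - f a).

Definition zero_times (A B : comPzRingType) (b : B -> Prop) : A * B -> Prop :=
  fun p => p.1 = 0 /\ b p.2.

Definition preim_times_zero (A B : comPzRingType) (f : A -> B) (b : B -> Prop)
  : A * B -> Prop := fun p => b (f p.1) /\ p.2 = 0.

(* Main.v *)
Set Warnings "-notation-overridden,-ambiguous-paths".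
Require Import Defs.
From mathcomp Require Import all_boot all_order all_algebra.
From Stdlib Require Import Classical IndefiniteDescription.
Import GRing.Theory.
Local Open Scope ring_scope.

Lemma choice_ax (T U : Type) (P : T -> U -> Prop) :
  (forall t, exists u, P t u) -> exists g, forall t, P t (g t).
Proof.
move=> H; exists (fun t => proj1_sig (constructive_indefinite_description _ (H t))).
move=> t; exact: (proj2_sig (constructive_indefinite_description _ (H t))).
Qed.

Lemma ord_to_nat {T : Type} {P : T -> Prop} {d : T} {n} {c : 'I_n -> T} :
  P d -> (forall i, P (c i)) ->
  exists cn : nat -> T, (forall k, P (cn k)) /\ forall i : 'I_n, c i = cn i.
Proof.
move=> Pd Pc; exists (fun k => if insub k is Some i then c i else d); split.
  by move=> k; case: insub.
by move=> i; rewrite valK.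
Qed.

Lemma sumG (R : comPzRingType) (r0 : R) (l : seq R) (F : nat -> R) :
  \sum_(i < size (r0 :: l)) F i * (r0 :: l)`_i =
  F 0%N * r0 + \sum_(i < size l) F i.+1 * l`_i.
Proof.
by rewrite big_ord_recl.
Qed.
Lemma quot_prufer (R R' : comPzRingType) (pi : {rmorphism R -> R'})
  (S : R -> Prop) (S' : R' -> Prop) (r0 : R) :
  S 0 -> S 1 -> (forall x y, S x -> S y -> S (x + y)) ->
  (forall x y, S x -> S y -> S (x * y)) -> (forall x, S x -> S (- x)) ->
  (forall p, S p -> S' (pi p)) -> (forall y, S' y -> exists p, S p /\ pi p = y) ->
  regular_in S r0 -> pi r0 = 0 -> prufer_in S -> prufer_in S'.
Proof.
move=> S0 S1 SD SM SN Hpi Hsurj [Sr0 r0reg] pir0 HP I' HI' [g' Hg'] [x' [Ix' x'reg]].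
have S'0 : S' 0 by rewrite -(rmorph0 pi); exact: Hpi.
have S'1 : S' 1 by rewrite -(rmorph1 pi); exact: Hpi.
have [lift Hlift] : exists lift : R' -> R,
    forall y, S (lift y) /\ (S' y -> pi (lift y) = y).
  apply: (@choice_ax _ _ (fun y u => S u /\ (S' y -> pi u = y))) => y; case: (classic (S' y)) => [Sy|nS].
    by have [p [Sp e]] := Hsurj y Sy; exists p.
  by exists 0; split=> // /nS.
have g'S : forall k, (k < size g')%N -> S' g'`_k.
  move=> k hk; case: HI' => HI'S _ _ _; apply: HI'S; apply/Hg'.
  exists (fun i => (val i == k)%:R); split.
    by move=> i; case: (val i == k).
  rewrite (bigD1 (Ordinal hk)) //= eqxx mul1r big1 ?addr0 // => i ne.
  rewrite (_ : (val i == k) = false) ?mul0r //; apply/negbTE.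
  apply: contra ne => /eqP e; apply/eqP; exact: val_inj.
have Ssum : forall n (F : 'I_n -> R), (forall i, S (F i)) -> S (\sum_(i < n) F i).
  by move=> n F HF; apply: (big_ind S) => // i _; exact: HF.
set l := map lift g'.
set G := r0 :: l.
have GS : forall k, S G`_k.
  case=> [|k] //=; case: (ltnP k (size l)) => hk.
    by rewrite /l (nth_map 0) -?(size_map lift) //; case: (Hlift g'`_k).
  by rewrite nth_default.
pose J := fun q => exists c : 'I_(size G) -> R,
   (forall i, S (c i)) /\ q = \sum_(i < size G) c i * G`_i.
have Jinv : forall q, J q -> exists cn : nat -> R, (forall k, S (cn k)) /\
     q = \sum_(i < size G) cn i * G`_i.
  move=> q [c [Sc ->]]; have [cn [Scn e]] := ord_to_nat S0 Sc.
  by exists cn; split=> //; apply: eq_bigr => i _; rewrite e.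
have Jnat : forall cn : nat -> R, (forall k, S (cn k)) ->
     J (\sum_(i < size G) cn i * G`_i).
  by move=> cn Scn; exists (fun i => cn i).
have JS : forall q, J q -> S q.
  by move=> q /Jinv [cn [Scn ->]]; apply: Ssum => i; apply: SM.
have idJ : ideal_in S J.
  split=> //.
  - have := Jnat (fun _ => 0) (fun _ => S0).
    by rewrite big1 // => i _; rewrite mul0r.
  - move=> x y /Jinv [c [Sc ->]] /Jinv [d [Sd ->]].
    have := Jnat (fun k => c k + d k) (fun k => SD _ _ (Sc k) (Sd k)).
    suff -> : \sum_(i < size G) c i * G`_i + \sum_(i < size G) d i * G`_i =
      \sum_(i < size G) (c i + d i) * G`_i by [].
    by rewrite -big_split /=; apply: eq_bigr => i _; rewrite mulrDl.
  - move=> r x Sr /Jinv [c [Sc ->]].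
    have := Jnat (fun k => r * c k) (fun k => SM _ _ Sr (Sc k)).
    suff -> : r * \sum_(i < size G) c i * G`_i =
      \sum_(i < size G) (r * c i) * G`_i by [].
    by rewrite mulr_sumr; apply: eq_bigr => i _; rewrite mulrA.
have fgJ : fin_gen_in S J by exists G.
have Jr0 : J r0.
  have := Jnat (fun k => if k is 0%N then 1 else 0) (fun k => if k is 0%N then S1 else S0).
  rewrite /G (@sumG _ r0 l (fun k => if k is 0%N then 1 else 0)) /= mul1r big1 ?addr0 // => i _; exact: mul0r.
have piJ : forall q, J q -> I' (pi q).
  move=> q /Jinv [cn [Scn ->]]; rewrite /G (@sumG _ r0 l cn) rmorphD rmorphM pir0 mulr0 add0r.
  rewrite rmorph_sum; apply/Hg'.
  exists (fun i : 'I_(size g') => pi (cn (val i).+1)); split.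
    by move=> i; apply: Hpi.
  rewrite /l size_map; apply: eq_bigr => i _.
  by rewrite rmorphM (nth_map 0) // (proj2 (Hlift _) (g'S _ (ltn_ord i))).
have liftJ : forall y', I' y' -> exists q, J q /\ pi q = y'.
  move=> y' /Hg' [c' [Sc' ->]].
  have [cn [Scn e]] := ord_to_nat S'0 Sc'.
  pose F := fun k : nat => if k is k'.+1 then lift (cn k') else 0.
  exists (\sum_(i < size G) F i * G`_i).
  split; first by apply: Jnat => -[|k] //; case: (Hlift (cn k)).
  rewrite /G (@sumG _ r0 l F) /F mul0r add0r rmorph_sum /l size_map; apply: eq_bigr => i _.
  rewrite rmorphM (nth_map 0) // e.
  by rewrite (proj2 (Hlift (cn i)) (Scn i)) (proj2 (Hlift _) (g'S _ (ltn_ord i))).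
have [s [n [xs [a [[Ss sreg] Jxs Sa sxa Ha]]]]] := HP J idJ fgJ (ex_intro _ r0 (conj Jr0 (conj Sr0 r0reg))).
have [p [Jp pip]] := liftJ x' Ix'.
have [z Hz] : exists z : 'I_n -> R, forall i, S (z i) /\ a i * p = s * z i.
  apply: (@choice_ax _ _ (fun i w => S w /\ a i * p = s * w)) => i.
  by have [w [Sw e]] := Ha i p Jp; exists w.
exists x', n, (fun i => pi (xs i)), (fun i => pi (z i)); split.
- exact: x'reg.
- by move=> i; apply: piJ.
- by move=> i; apply: Hpi; case: (Hz i).
- have Ssz : S (\sum_(i < n) xs i * z i) by apply: Ssum => i; apply: SM; [apply: JS | case: (Hz i)].
  have : \sum_(i < n) xs i * z i - p = 0.
    apply: sreg; first by apply: SD => //; apply: SN; apply: JS.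
    rewrite mulrBr mulr_sumr.
    under eq_bigr => i _ do rewrite mulrCA -(proj2 (Hz i)) mulrA.
    by rewrite -mulr_suml sxa subrr.
  move/eqP; rewrite subr_eq0 => /eqP e; rewrite -pip -e rmorph_sum.
  by apply: eq_bigr => i _; rewrite rmorphM.
- move=> i y' Iy'; have [q [Jq <-]] := liftJ y' Iy'.
  have [w [Sw e]] := Ha i q Jq.
  exists (pi w); split; first exact: Hpi.
  have : z i * q - w * p = 0.
    apply: sreg; first by apply: SD; [apply: SM; [case: (Hz i) | apply: JS] | apply: SN; apply: SM => //; apply: JS].
    by rewrite mulrBr mulrA -(proj2 (Hz i)) mulrAC e mulrA subrr.
  by move/eqP; rewrite subr_eq0 => /eqP ee; rewrite -rmorphM ee rmorphM -pip mulrC.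
Qed.

Theorem corollary4p5 (A B : comPzRingType) (f : {rmorphism A -> B})
  (b : B -> Prop) :
  ideal_in (@full_pred B) b ->
  prufer_in (amalg f b) ->
  (regular_ideal_in (amalg f b) (@zero_times A B b) -> prufer A) /\
  (regular_ideal_in (amalg f b) (preim_times_zero f b) ->
     prufer_in (img_plus f b)).
Proof.
move=> Hb HP.
case: (Hb) => _ b0 bD bM.
have bN : forall x, b x -> b (- x) by move=> x bx; rewrite -mulN1r; apply: bM.
have S0 : amalg f b 0 by rewrite /amalg /= rmorph0 subrr.
have S1 : amalg f b 1 by rewrite /amalg /= rmorph1 subrr.
have SD : forall x y, amalg f b x -> amalg f b y -> amalg f b (x + y).
  move=> x y; rewrite /amalg /= rmorphD opprD addrACA; exact: bD.
have SM : forall x y, amalg f b x -> amalg f b y -> amalg f b (x * y).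
  move=> x y; rewrite /amalg /= rmorphM => hx hy.
  have -> : x.2 * y.2 - f x.1 * f y.1 = y.2 * (x.2 - f x.1) + f x.1 * (y.2 - f y.1).
    by rewrite mulrBr mulrBr [y.2 * _]mulrC [y.2 * _]mulrC addrA subrK.
  by apply: bD; apply: bM.
have SN : forall x, amalg f b x -> amalg f b (- x).
  by move=> x; rewrite /amalg /= rmorphN -opprD; apply: bN.
split.
  move=> [r0 [[r01 r02] r0reg]].
  apply: (@quot_prufer _ _ (@fst A B : {rmorphism _ -> _}) (amalg f b) (@full_pred A) r0) => //.
  by move=> y _; exists (y, f y); split=> //; rewrite /amalg /= subrr.
move=> [r0 [[r01 r02] r0reg]].
apply: (@quot_prufer _ _ (@snd A B : {rmorphism _ -> _}) (amalg f b) (img_plus f b) r0) => //.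
  by move=> p Sp; exists p.1.
by move=> y [a Ha]; exists (a, y).
Qed.
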